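(* Let $\mathcal{A}$ be a Banach algebra such that $\mathcal{A}^*$ factors on the left, i.e. $\mathcal{A}^*=\{a'a: a'\in\mathcal{A}^*,a\in\mathcal{A}\}$. Then $a\cdot a''\in Z_1(\mathcal{A}^{**})$ for all $a\in\mathcal{A}$, $a''\in\mathcal{A}^{**}$ if and only if $\mathcal{A}$ is Arens regular.
   Context: For $a,b\in\mathcal{A}$, $a'\in\mathcal{A}^*$, $a'',b''\in\mathcal{A}^{**}$: $\langle a'a,b\rangle=\langle a',ab\rangle$, $\langle b''a',a\rangle=\langle b'',a'a\rangle$, and the first Arens product is $\langle a''\cdot b'',a'\rangle=\langle a'',b''a'\rangle$. The second Arens product is given by $\langle a\circ a',b\rangle=\langle a',ba\rangle$, $\langle a'\circ a'',a\rangle=\langle a'',a\circ a'\rangle$, $\langle a''\circ b'',a'\rangle=\langle b'',a'\circ a''\rangle$. $Z_1(\mathcal{A}^{**})=\{a''\in\mathcal{A}^{**}: b''\mapsto a''\cdot b''\text{ is weak}^*\text{-to-weak}^*\text{ continuous}\}$. $\mathcal{A}$ is Arens regular if the two Arens products coincide on $\mathcal{A}^{**}$ (equivalently $Z_1(\mathcal{A}^{**})=\mathcal{A}^{**}$). *)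

(* Defs.v *)
From HB Require Import structures.
From mathcomp Require Import all_boot all_order all_algebra.
From mathcomp Require Import all_classical all_reals all_analysis.
From mathcomp Require Import complex.
Import Order.TTheory GRing.Theory Num.Theory.
Import numFieldNormedType.Exports.
Local Open Scope ring_scope.
Local Open Scope classical_set_scope.

Set Implicit Arguments.
Unset Strict Implicit.
Unset Printing Implicit Defensive.

Section BanachAlgebra.
Variables (K : numFieldType) (A : normedModType K) (mul : A -> A -> A).

Definition banach_algebra_mul : Prop :=
  [/\ (forall (k : K) (a b c : A), mul (k *: a + b) c = k *: mul a c + mul b c),
      (forall (k : K) (a b c : A), mul a (k *: b + c) = k *: mul a b + mul a c),
      (forall a b c : A, mul a (mul b c) = mul (mul a b) c) &
      (forall a b : A, `|mul a b| <= `|a| * `|b|)].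

Definition is_dual (f : A -> K) : Prop :=
  (forall (k : K) (x y : A), f (k *: x + y) = k * f x + f y) /\
  (exists M : K, forall x : A, `|f x| <= M * `|x|).

(* A functional on A -> K is only
   relevant through its values on A^{*}; "bounded" is stated as
   |Phi f| <= M * ||f|| with ||f|| = inf {C | forall x, |f x| <= C |x|}. *)
Definition is_bidual (Phi : (A -> K) -> K) : Prop :=
  (forall (k : K) (f g : A -> K), is_dual f -> is_dual g ->
     Phi (fun x => k * f x + g x) = k * Phi f + Phi g) /\
  (exists M : K, forall (f : A -> K) (C : K), is_dual f ->
     (forall x : A, `|f x| <= C * `|x|) -> `|Phi f| <= M * C).

Definition hat (a : A) : (A -> K) -> K := fun f => f a.

(* <a' a, b> = <a', a b> *)
Definition dual_r (a' : A -> K) (a : A) : A -> K := fun b => a' (mul a b).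
(* <b'' a', a> = <b'', a' a> *)
Definition bidual_l (b'' : (A -> K) -> K) (a' : A -> K) : A -> K :=
  fun a => b'' (dual_r a' a).
(* <a'' . b'', a'> = <a'', b'' a'> *)
Definition arens1 (a'' b'' : (A -> K) -> K) : (A -> K) -> K :=
  fun a' => a'' (bidual_l b'' a').

(* <a o a', b> = <a', b a> *)
Definition dual_l (a : A) (a' : A -> K) : A -> K := fun b => a' (mul b a).
(* <a' o a'', a> = <a'', a o a'> *)
Definition bidual_r (a' : A -> K) (a'' : (A -> K) -> K) : A -> K :=
  fun a => a'' (dual_l a a').
(* <a'' o b'', a'> = <b'', a' o a''> *)
Definition arens2 (a'' b'' : (A -> K) -> K) : (A -> K) -> K :=
  fun a' => b'' (bidual_r a' a'').

Definition weakstar_cvg (F : set_system ((A -> K) -> K)) (Phi : (A -> K) -> K)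
  : Prop :=
  forall a' : A -> K, is_dual a' -> (fun x => x a') @ F --> Phi a'.

(* T : A^{**} -> A^{**} is weak-star-to-weak-star continuous (on the subspace A^{**}
   of (A -> K) -> K carrying the initial topology of the evaluations at
   elements of A^{*} ), characterized by filters. *)
Definition weakstar_continuous (T : ((A -> K) -> K) -> ((A -> K) -> K)) : Prop :=
  forall (F : set_system ((A -> K) -> K)) (Phi : (A -> K) -> K),
    Filter F -> F is_bidual -> is_bidual Phi ->
    weakstar_cvg F Phi -> weakstar_cvg (T @ F) (T Phi).

Definition in_Z1 (a'' : (A -> K) -> K) : Prop :=
  is_bidual a'' /\ weakstar_continuous (arens1 a'').

Definition dual_factors_left : Prop :=
  forall f : A -> K, is_dual f ->
    exists (a' : A -> K) (a : A), is_dual a' /\ f = dual_r a' a.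

Definition arens_regular : Prop :=
  forall a'' b'' : (A -> K) -> K, is_bidual a'' -> is_bidual b'' ->
    forall a' : A -> K, is_dual a' -> arens1 a'' b'' a' = arens2 a'' b'' a'.

End BanachAlgebra.

(* Main.v *)
Require Import Defs.
From HB Require Import structures.
From mathcomp Require Import all_boot all_order all_algebra.
From mathcomp Require Import all_classical all_reals all_analysis.
From mathcomp Require Import complex.
From mathcomp Require Import ring lra.
Import Order.TTheory GRing.Theory Num.Theory.
Import numFieldNormedType.Exports.
Local Open Scope ring_scope.
Local Open Scope classical_set_scope.
Set Implicit Arguments.
Unset Strict Implicit.

Section S.
Variables (K : numFieldType) (A : normedModType K) (mul : A -> A -> A).
Hypothesis HB : banach_algebra_mul mul.

Lemma mulDr (a b c : A) (k : K) : mul a (k *: b + c) = k *: mul a b + mul a c.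
Proof. by case: HB. Qed.
Lemma mulDl (a b c : A) (k : K) : mul (k *: a + b) c = k *: mul a c + mul b c.
Proof. by case: HB. Qed.
Lemma mulA' (a b c : A) : mul a (mul b c) = mul (mul a b) c.
Proof. by case: HB. Qed.
Lemma mul_norm (a b : A) : `|mul a b| <= `|a| * `|b|.
Proof. by case: HB. Qed.

Lemma dual_nonneg (f : A -> K) : is_dual f ->
  exists M : K, 0 <= M /\ forall x, `|f x| <= M * `|x|.
Proof.
move=> [_ [M HM]]; exists `|M|; split => // x.
have h := HM x.
have h0 : 0 <= M * `|x| by apply: le_trans h.
by rewrite -[`|x|]ger0_norm // -normrM ger0_norm.
Qed.

Lemma dual0 (f : A -> K) : is_dual f -> f 0 = 0.
Proof.
move=> [Hl _]; have := Hl 1 0 0; rewrite scaler0 add0r mul1r.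
by move=> h; apply: (addrI (f 0)); rewrite addr0 -h.
Qed.

Lemma dualC (f g : A -> K) (k : K) : is_dual f -> is_dual g ->
  is_dual (fun x => k * f x + g x).
Proof.
move=> df dg; have [Mf [Mf0 Hf]] := dual_nonneg df; have [Mg [Mg0 Hg]] := dual_nonneg dg.
case: df dg => [Lf _] [Lg _]; split.
  move=> c x y; rewrite Lf Lg; ring.
exists (`|k| * Mf + Mg) => x.
apply: le_trans (ler_normD _ _) _.
rewrite normrM mulrDl -mulrA lerD // ler_wpM2l //.
Qed.

Lemma dual_zero : is_dual (fun _ : A => 0).
Proof. split; first by move=> *; rewrite mulr0 addr0.
by exists 0 => x; rewrite normr0 mul0r.
Qed.

Lemma bidual0 (P : (A -> K) -> K) : is_bidual P -> P (fun _ => 0) = 0.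
Proof.
move=> [HL _]; have := HL 1 _ _ dual_zero dual_zero.
have -> : (fun x : A => 1 * (0:K) + 0) = (fun _ => 0) by apply: funext => x; rewrite mul1r addr0.
rewrite mul1r => h; apply: (addrI (P (fun _ => 0))); by rewrite addr0 -h.
Qed.


Lemma dual_r_dual (f : A -> K) (a : A) : is_dual f -> is_dual (dual_r mul f a).
Proof.
move=> df; have [M [M0 HM]] := dual_nonneg df; case: df => [Lf _]; split.
  by move=> k x y; rewrite /dual_r mulDr Lf.
exists (M * `|a|) => x; rewrite /dual_r.
apply: le_trans (HM _) _; rewrite -mulrA ler_wpM2l //; exact: mul_norm.
Qed.

Lemma dual_l_dual (f : A -> K) (a : A) : is_dual f -> is_dual (dual_l mul a f).
Proof.
move=> df; have [M [M0 HM]] := dual_nonneg df; case: df => [Lf _]; split.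
  by move=> k x y; rewrite /dual_l mulDl Lf.
exists (M * `|a|) => x; rewrite /dual_l.
apply: le_trans (HM _) _; rewrite -mulrA ler_wpM2l // mulrC; exact: mul_norm.
Qed.

Lemma bidual_r_dual (f : A -> K) (c : (A -> K) -> K) : is_dual f -> is_bidual c ->
  is_dual (bidual_r mul f c).
Proof.
move=> df [Lc [Mc HMc]]; have [M [M0 HM]] := dual_nonneg df; split.
  move=> k x y; rewrite /bidual_r -Lc; try exact: dual_l_dual.
  congr c; apply: funext => b; rewrite /dual_l mulDr.
  by case: df => [Lf _]; rewrite Lf.
exists (Mc * M) => x; rewrite /bidual_r -mulrA; apply: HMc; first exact: dual_l_dual.
move=> b; rewrite /dual_l; apply: le_trans (HM _) _.
rewrite -mulrA ler_wpM2l // mulrC; exact: mul_norm.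
Qed.

Lemma hat_bidual (a : A) : is_bidual (@hat K A a).
Proof.
split; first by move=> k f g _ _.
exists `|a| => f C _ H; rewrite /hat mulrC; exact: H.
Qed.

Lemma hat_arens_bidual (a : A) (b : (A -> K) -> K) : is_bidual b ->
  is_bidual (arens1 mul (hat a) b).
Proof.
move=> [Lb [Mb HMb]]; split.
  move=> k f g df dg; rewrite /arens1 /hat /bidual_l.
  by rewrite -Lb //; exact: dual_r_dual.
exists (Mb * `|a|) => f C df HC; rewrite /arens1 /hat /bidual_l.
rewrite -mulrA; apply: HMb; first exact: dual_r_dual.
move=> x; rewrite /dual_r.
have [x0|xpos] := eqVneq `|x| 0.
  have h : `|mul a x| = 0.
    apply/eqP; rewrite eq_le normr_ge0 andbT.
    by apply: le_trans (mul_norm _ _) _; rewrite x0 mulr0.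
  by have := HC (mul a x); rewrite h x0 !mulr0.
have xp : 0 < `|x| by rewrite lt_def xpos normr_ge0.
have C0 : 0 <= C.
  by rewrite -(pmulr_lge0 _ xp); apply: le_trans (HC x).
apply: le_trans (HC _) _; rewrite [`|a| * C]mulrC -mulrA ler_wpM2l //; exact: mul_norm.
Qed.


Fixpoint allP (P : (A -> K) -> Prop) (l : seq (A -> K)) : Prop :=
  if l is g :: l' then P g /\ allP P l' else True.

Definition linP (P : (A -> K) -> K) := forall (k : K) (f g : A -> K),
  is_dual f -> is_dual g -> P (fun x => k * f x + g x) = k * P f + P g.

Lemma linP0 P : linP P -> P (fun _ => 0) = 0.
Proof.
move=> HL; have := HL 1 _ _ dual_zero dual_zero.
have -> : (fun x : A => 1 * (0:K) + 0) = (fun _ => 0) by apply: funext => x; rewrite mul1r addr0.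
rewrite mul1r => h; apply: (addrI (P (fun _ => 0))); by rewrite addr0 -h.
Qed.

Lemma kerL (gs : seq (A -> K)) : allP (@is_dual K A) gs -> forall f, is_dual f ->
  (forall y, allP (fun g => g y = 0) gs -> f y = 0) ->
  forall P, linP P -> allP (fun g => P g = 0) gs -> P f = 0.
Proof.
elim: gs => [|g hs IH] /=.
  move=> _ f df Hf P LP _.
  have -> : f = (fun _ => 0) by apply: funext => y; exact: Hf.
  exact: linP0.
move=> [dg dhs] f df Hf P LP [Pg Phs].
case: (pselect (exists z, allP (fun h => h z = 0) hs /\ g z != 0)) => [[z [hz gz]]|nz].
  pose c := f z / g z.
  have df' : is_dual (fun x => (- c) * g x + f x) by exact: dualC.
  have : P (fun x => (- c) * g x + f x) = 0.
    apply: (IH dhs) => // y hy.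
    pose y' := (- (g y / g z)) *: z + y.
    have hy' : allP (fun h => h y' = 0) hs.
      move: hz hy; rewrite {}/y'; move: dhs; elim: (hs) => //= h l IHl [dh dl] [hz hzl] [hy hyl].
      split; last exact: IHl.
      by case: dh => [Lh _]; rewrite Lh hz hy mulr0 addr0.
    have gy' : g y' = 0.
      by case: dg => [Lg _]; rewrite /y' Lg mulNr -mulrA mulVf // mulr1 addNr.
    have := Hf y' (conj gy' hy').
    case: df => [Lf _]; rewrite /y' Lf /c => h.
    rewrite -h; congr (_ + _); rewrite !mulNr; congr (- _).
    ring.
  by rewrite LP // Pg mulr0 add0r.
apply: (IH dhs) => // y hy; apply: Hf; split => //.
apply: contra_notP nz => gy; exists y; split => //; exact/eqP.
Qed.


Lemma allP_impl (P1 P2 P3 : (A -> K) -> Prop) l :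
  (forall g, P1 g -> P2 g -> P3 g) -> allP P1 l -> allP P2 l -> allP P3 l.
Proof. by move=> H; elim: l => //= g l IH [? ?] [? ?]; split; auto. Qed.

Lemma interp (gs : seq (A -> K)) : allP (@is_dual K A) gs -> forall P, linP P ->
  exists x, allP (fun g => g x = P g) gs.
Proof.
move=> dgs P LP; elim: gs dgs => [|f gs IH] /=; first by exists 0.
move=> [df dgs]; have [x0 Hx0] := IH dgs.
case: (pselect (exists y, allP (fun g => g y = 0) gs /\ f y != 0)) => [[y [hy fy]]|ny].
  exists (((P f - f x0) / f y) *: y + x0); split.
    by case: df => [Lf _]; rewrite Lf -mulrA mulVf // mulr1 subrK.
  apply: (allP_impl _ dgs (allP_impl (fun g (a : g y = 0) (b : g x0 = P g) => conj a b) hy Hx0)).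
  by move=> g [Lg _] [gy gx]; rewrite Lg gy gx mulr0 add0r.
have : (fun h => P h - h x0) f = 0.
  apply: (@kerL gs dgs f df _ (fun h => P h - h x0)).
  - move=> y hy; apply: contra_notP ny => fy; exists y; split => //; exact/eqP.
  - move=> k g h dg dh; rewrite LP //; ring.
  - apply: (allP_impl _ dgs Hx0) => g _ ->; exact: subrr.
by move/eqP; rewrite subr_eq0 => /eqP ->; exists x0; split.
Qed.


Lemma allP_cat P l1 l2 : allP P l1 -> allP P l2 -> allP P (l1 ++ l2).
Proof. by elim: l1 => //= g l IH [? ?] ?; split; auto. Qed.

Lemma allP_catl P l1 l2 : allP P (l1 ++ l2) -> allP P l1.
Proof. by elim: l1 => //= g l IH [? ?]; split; auto. Qed.

Lemma allP_catr P l1 l2 : allP P (l1 ++ l2) -> allP P l2.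
Proof. by elim: l1 => //= g l IH [? ?]; auto. Qed.

Definition Fb (b : (A -> K) -> K) : set_system ((A -> K) -> K) :=
  fun S => exists gs, allP (@is_dual K A) gs /\
    forall x, allP (fun g => g x = b g) gs -> S (hat x).

Lemma Fb_filter b : Filter (Fb b).
Proof.
split.
- by exists [::].
- move=> S1 S2 [g1 [d1 H1]] [g2 [d2 H2]]; exists (g1 ++ g2); split.
    exact: allP_cat.
  move=> x hx; split; [apply: H1; exact: allP_catl hx | apply: H2; exact: allP_catr hx].
- by move=> S1 S2 sub [gs [d H]]; exists gs; split => // x /H /sub.
Qed.

Lemma Fb_proper b : is_bidual b -> ProperFilter (Fb b).
Proof.
move=> [Lb _]; split; last exact: Fb_filter.
move=> [gs [d H]]; have [x hx] := interp d Lb; exact: H hx.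
Qed.


Lemma key (c b : (A -> K) -> K) (f : A -> K) : in_Z1 mul c -> is_bidual b ->
  is_dual f -> arens1 mul c b f = arens2 mul c b f.
Proof.
move=> [bc Hc] bb df.
have FF := Fb_proper bb.
have Hbi : Fb b (@is_bidual K A) by exists [::]; split => // x _; exact: hat_bidual.
have Hcv : weakstar_cvg (Fb b) b.
  move=> a' da'; apply: cvg_near_cst.
  exists [:: a']; split => //= x [hx _]; exact: hx.
have H1 := Hc (Fb b) b (Fb_filter b) Hbi bb Hcv f df.
have H2 : (fun x => x f) @ (arens1 mul c @ Fb b) --> arens2 mul c b f.
  apply: cvg_near_cst.
  exists [:: bidual_r mul f c]; split => /=; first by split => //; exact: bidual_r_dual.
  move=> x [hx _]; exact: hx.
have PF : ProperFilter ((fun x => x f) @ (arens1 mul c @ Fb b)) by exact: fmap_proper_filter.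
exact: (@cvg_unique _ (@norm_hausdorff K K) _ PF _ _ H1 H2).
Qed.

End S.

Theorem corollary2p3 (R : realType) (A : completeNormedModType R[i])
  (mul : A -> A -> A) :
  banach_algebra_mul mul ->
  dual_factors_left mul ->
  ((forall (a : A) (a'' : (A -> R[i]) -> R[i]),
      is_bidual a'' -> in_Z1 mul (arens1 mul (hat a) a''))
   <-> arens_regular mul).
Proof.
move=> HB Hfac; split.
  move=> H a'' b'' ba bb a' da'.
  have [f [a [df ->]]] := Hfac a' da'.
  have E1 : arens1 mul a'' b'' (dual_r mul f a) =
            arens1 mul (arens1 mul (hat a) a'') b'' f.
    rewrite /arens1 /bidual_l /dual_r /hat; apply: f_equal; apply: funext => x.
    by apply: f_equal; apply: funext => y; rewrite (mulA' HB).
  have E2 : arens2 mul a'' b'' (dual_r mul f a) =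
            arens2 mul (arens1 mul (hat a) a'') b'' f.
    rewrite /arens2 /bidual_r /arens1 /bidual_l /dual_l /dual_r /hat; apply: f_equal; apply: funext => x.
    by apply: f_equal; apply: funext => y; rewrite (mulA' HB).
  rewrite E1 E2; apply: (key HB) => //; exact: H.
move=> reg a a'' ba.
have bc := hat_arens_bidual HB a ba.
split; first exact: bc.
move=> F Phi FF FB bPhi HF a' da'.
pose c := arens1 mul (hat a) a''.
have E : arens1 mul c Phi a' = Phi (bidual_r mul a' c) by exact: (reg c Phi bc bPhi a' da').
rewrite E.
have HB2 := HF _ (bidual_r_dual HB da' bc).
apply: cvg_trans HB2.
have NE : {near F, (fun x => x (bidual_r mul a' c)) =1 (fun x => arens1 mul c x a')}.
  apply: filterS FB => x bx; exact: (esym (reg c x bc bx a' da')).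
exact: (near_eq_cvg NE).
Qed.
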